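(* Let $e_1,\dots,e_N\in\mathbb{R}^{d_e}$ satisfy $\|e_i\|_2=r$ for all $i$ and $\|e_i-e_j\|_2=f(|i-j|)\ge c|i-j|$ for a positive increasing function $f$ and an absolute constant $c>0$, and let $\Gamma\in\mathbb{R}^{N\times N}$ with $\Gamma_{ij}=\exp(-\|e_i-e_j\|_2^\nu/\ell)$, $\nu\in[1,2]$, $\ell>0$. For an integer $J$ let $\bar\Gamma_{ij}=\Gamma_{ij}\mathbf{1}\{|i-j|<J\}$ and $\Delta\Gamma=\Gamma-\bar\Gamma$. Then for any $\epsilon>0$, taking $$J=\Big\lceil\Big(\frac{\ell}{2c^\nu}\log\big(N\ell/(\epsilon^2c^\nu)\big)\Big)^{1/\nu}\Big\rceil+1$$ gives $\|\Delta\Gamma\|_{\rm F}\le\epsilon$.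
   Context: $\|\cdot\|_{\rm F}$ is the Frobenius norm. *)

(* Defs.v *)
From HB Require Import structures.
From mathcomp Require Import all_boot all_order all_algebra.
From mathcomp Require Import all_classical all_reals all_analysis.
Set Implicit Arguments. Unset Strict Implicit. Unset Printing Implicit Defensive.
Import Order.TTheory GRing.Theory Num.Theory.
Local Open Scope ring_scope.

Definition norm2 {R : realType} {n : nat} (v : 'rV[R]_n) : R :=
  Num.sqrt (\sum_(k < n) v 0 k ^+ 2).

Definition frob_norm {R : realType} {m n : nat} (A : 'M[R]_(m, n)) : R :=
  Num.sqrt (\sum_(i < m) \sum_(j < n) A i j ^+ 2).

Definition Gamma_mx {R : realType} {N de : nat} (e : 'I_N -> 'rV[R]_de)
  (nu ell : R) : 'M[R]_N :=
  \matrix_(i, j) expR (- (norm2 (e i - e j) `^ nu) / ell).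

Definition band_trunc {R : realType} {N : nat} (J : int) (G : 'M[R]_N) : 'M[R]_N :=
  \matrix_(i, j) (if `|(i : int) - (j : int)| < J then G i j else 0).

Definition DeltaGamma {R : realType} {N : nat} (J : int) (G : 'M[R]_N) : 'M[R]_N :=
  G - band_trunc J G.

Definition J_choice {R : realType} (N : nat) (c nu ell eps : R) : int :=
  Num.ceil (((ell / (2 * c `^ nu)) *
      ln (N%:R * ell / (eps ^+ 2 * c `^ nu))) `^ nu^-1) + 1.

(* Main.v *)
Require Import Defs.
From HB Require Import structures.
From mathcomp Require Import all_boot all_order all_algebra.
From mathcomp Require Import all_classical all_reals all_analysis.
From mathcomp Require Import zify ring lra.
Import Order.TTheory GRing.Theory Num.Theory.
Local Open Scope ring_scope.

Lemma shift_le (R : realType) (h : nat -> R) (i N : nat) :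
  h 0%N = 0 -> (forall m, 0 <= h m) ->
  \sum_(j < N) h (j - i)%N <= \sum_(m < N) h m.
Proof.
move=> h0 hge; elim: i N => [|i IH] N.
  by apply: ler_sum => j _; rewrite subn0.
case: N => [|N]; first by rewrite !big_ord0.
rewrite big_ord_recl /= sub0n h0 add0r.
under eq_bigr => j _ do rewrite /bump /= add1n subSS.
apply: (le_trans (IH N)).
by rewrite big_ord_recr /= lerDl.
Qed.

Lemma rev_le (R : realType) (h : nat -> R) (i N : nat) :
  (i < N)%N -> h 0%N = 0 -> (forall m, 0 <= h m) ->
  \sum_(j < N) h (i - j)%N <= \sum_(m < N) h m.
Proof.
move=> iN h0 hge.
rewrite (reindex_inj rev_ord_inj) /=.
have -> : \sum_(j < N) h (i - (N - j.+1))%N = \sum_(j < N) h (j - (N.-1 - i))%N.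
  apply: eq_bigr => j _; congr h; have := ltn_ord j; lia.
exact: shift_le.
Qed.

Definition hz {R : realType} (q : R) (m : nat) : R := if m is 0%N then 0 else q ^+ m.

Lemma geo_le (R : realType) (q : R) (N : nat) : 0 <= q < 1 ->
  \sum_(m < N) hz q (m : nat) <= q / (1 - q).
Proof.
move=> /andP[q0 q1].
have key : forall n, (\sum_(m < n.+1) hz q (m : nat)) * (1 - q)
    = q - q ^+ n.+1.
  elim=> [|n IH]; first by rewrite big_ord_recl big_ord0 /= /hz expr1; ring.
  rewrite big_ord_recr /= mulrDl IH /hz !exprS; ring.
have hS : forall n, \sum_(m < n) hz q (m : nat) <=
    \sum_(m < n.+1) hz q (m : nat).
  move=> n; rewrite big_ord_recr /= lerDl /hz.
  by case: n => [//|n]; exact: exprn_ge0.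
apply: (le_trans (hS N)).
rewrite ler_pdivlMr ?subr_gt0 // key gerDl oppr_le0.
exact: exprn_ge0.
Qed.

Lemma pow_split (R : realType) (k s nu : R) :
  0 <= s -> s + 1 <= k -> 1 <= nu -> s `^ nu + (k - s) <= k `^ nu.
Proof.
move=> s0 sk nu1.
have k1 : 1 <= k by lra.
have k0 : k != 0 by apply/eqP => k0; lra.
have hk : k `^ nu = k * k `^ (nu - 1).
  have e1 : nu = 1 + (nu - 1) by ring.
  by rewrite {1}e1 (@powRD _ k 1 (nu - 1)) ?k0 ?orbT ?implybT // powRr1 //; lra.
have hs : s `^ nu = s * s `^ (nu - 1).
  have [->|sn0] := eqVneq s 0; first by rewrite mul0r powR0 //; apply/eqP; lra.
  have e2 : nu = 1 + (nu - 1) by ring.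
  by rewrite {1}e2 (@powRD _ s 1 (nu - 1)) ?sn0 ?orbT ?implybT // powRr1.
have kp1 : 1 <= k `^ (nu - 1).
  have h01 : 0 <= nu - 1 by lra.
  by have := ler_powR k1 h01; rewrite powRr0.
have skp : s `^ (nu - 1) <= k `^ (nu - 1).
  by apply: ge0_ler_powR => //; rewrite ?nnegrE //; lra.
rewrite hk hs.
have : s * s `^ (nu - 1) <= s * k `^ (nu - 1) by rewrite ler_wpM2l.
have : (k - s) <= (k - s) * k `^ (nu - 1) by rewrite ler_peMr //; lra.
lra.
Qed.

Theorem lemma4 (R : realType) (N de : nat) (e : 'I_N -> 'rV[R]_de)
  (r c nu ell : R) (f : nat -> R) :
  (forall i : 'I_N, norm2 (e i) = r) ->
  (forall k : nat, (0 < k)%N -> 0 < f k) ->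
  (forall m n : nat, (m < n)%N -> f m < f n) ->
  (forall i j : 'I_N, norm2 (e i - e j) = f `|(i : nat) - (j : nat)|%N) ->
  0 < c ->
  (forall k : nat, c * k%:R <= f k) ->
  1 <= nu <= 2 -> 0 < ell ->
  forall eps : R, 0 < eps ->
    frob_norm (DeltaGamma (J_choice N c nu ell eps) (Gamma_mx e nu ell)) <= eps.
Proof.
move=> hr fpos finc he c0 fc /andP[nu1 nu2] l0 eps e0.
case: N e hr he => [|N] e hr he.
  by rewrite /frob_norm big_ord0 sqrtr0 ltW.
have cn0 : 0 < c `^ nu by apply: powR_gt0.
set a := 2 * c `^ nu / ell.
have a0 : 0 < a by rewrite /a divr_gt0 // mulr_gt0.
set X := N.+1%:R * ell / (eps ^+ 2 * c `^ nu).
have X0 : 0 < X by rewrite /X divr_gt0 ?mulr_gt0 ?exprn_gt0 // ltr0n.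
set L := ell / (2 * c `^ nu) * ln X.
have aL : a * L = ln X by rewrite /a /L; field; apply/andP; split; 
  apply/eqP; lra.
set T := L `^ nu^-1.
have T0 : 0 <= T := powR_ge0 _ _.
set s := Num.ceil T.
have s0 : 0 <= s by rewrite ceil_ge0; lra.
set n0 := `|s|%N.
have sn0 : s = n0%:Z by rewrite /n0 gez0_abs.
have Js : J_choice N.+1 c nu ell eps = n0.+1%:Z.
  by rewrite /J_choice -/X -/L -/T -/s sn0 -addn1 PoszD.
set q := expR (- a).
have q0 : 0 <= q by apply: ltW; apply: expR_gt0.
have q1 : q < 1 by rewrite /q -[1]expR0 ltr_expR; lra.
pose h k := hz q (k - n0)%N.
have h0 : h 0%N = 0 by rewrite /h sub0n.
have hge : forall m, 0 <= h m.
  by move=> m; rewrite /h /hz; case: (m - n0)%N => // p; apply: exprn_ge0.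
have entry : forall i j : 'I_N.+1,
  (DeltaGamma (J_choice N.+1 c nu ell eps) (Gamma_mx e nu ell) i j) ^+ 2
    <= X^-1 * h `|(i : nat) - (j : nat)|%N.
  have f3 : L <= n0%:R `^ nu.
    have [L0|L0] := leP 0 L; last exact: le_trans (ltW L0) (powR_ge0 _ _).
    have Tn : T <= n0%:R by have := ceil_ge T; rewrite -/s sn0.
    have -> : L = T `^ nu.
      by rewrite /T -powRrM mulVf ?powRr1 // gt_eqF //; lra.
    by apply: ge0_ler_powR; rewrite ?nnegrE //; lra.
  move=> i j; rewrite Js /DeltaGamma /band_trunc !mxE.
  rewrite -abszE ltz_nat.
  set k := `|(i : nat) - (j : nat)|%N.
  case: ifP => hk.
    by rewrite subrr expr0n /=; apply: mulr_ge0; [rewrite invr_ge0 ltW | apply: hge].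
  rewrite oppr0 addr0 he -/k.
  have kn : (n0 < k)%N by rewrite ltnNge -ltnS hk.
  rewrite /h /hz.
  case E: (k - n0)%N => [|p]; first by move/eqP: E; rewrite subn_eq0 leqNgt kn.
  have ep : p.+1%:R = k%:R - n0%:R :> R by rewrite -E natrB // ltnW.
  have eX : X^-1 = expR (- ln X) by rewrite expRN lnK // posrE.
  rewrite /q eX -!expRM_natl -expRD ler_expR.
  rewrite ep -aL.
  have hP : L + (k%:R - n0%:R) <= k%:R `^ nu.
    have := @pow_split R k%:R n0%:R nu (ler0n _ _).
    rewrite natr1 ler_nat => /(_ kn nu1); lra.
  have fk0 : 0 <= c * k%:R by rewrite mulr_ge0 // ltW.
  have hF : c `^ nu * k%:R `^ nu <= f k `^ nu.
    rewrite -powRM; [|exact: ltW|exact: ler0n].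
    apply: ge0_ler_powR; rewrite ?nnegrE //; first lra.
    exact: le_trans fk0 (fc k).
  have A1 : a * k%:R `^ nu <= 2 * f k `^ nu / ell.
    have -> : a * k%:R `^ nu = (2 / ell) * (c `^ nu * k%:R `^ nu) by rewrite /a; ring.
    have -> : 2 * f k `^ nu / ell = (2 / ell) * f k `^ nu by ring.
    by rewrite ler_wpM2l // divr_ge0 // ltW.
  have A2 : a * (L + (k%:R - n0%:R)) <= a * k%:R `^ nu by rewrite ler_wpM2l // ltW.
  have -> : 2%:R * (- f k `^ nu / ell) = - (2 * f k `^ nu / ell) by ring.
  have -> : - (a * L) + (k%:R - n0%:R) * - a = - (a * (L + (k%:R - n0%:R))) by ring.
  lra.
have qa : q / (1 - q) <= a^-1.
  have qE : q * expR a = 1 by rewrite /q expRN mulVf // gt_eqF // expR_gt0.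
  have h1 : q * (1 + a) <= 1.
    by rewrite -[X in _ <= X]qE ler_wpM2l //; apply: expR_ge1Dx.
  rewrite ler_pdivrMr ?subr_gt0 // mulrC ler_pdivlMr //.
  nra.
have hsum : \sum_(m < N.+1) h m <= a^-1.
  apply: (le_trans _ (le_trans (@geo_le R q N.+1 (_ : 0 <= q < 1)) qa)); last by rewrite q0 q1.
  apply: (@shift_le R (hz q) n0 N.+1) => // m; rewrite /hz.
  by case: m => // p; apply: exprn_ge0.
have row : forall i : 'I_N.+1, \sum_(j < N.+1) h `|(i : nat) - (j : nat)|%N <= 2 * a^-1.
  move=> i.
  apply: (@le_trans _ _ (\sum_(j < N.+1) (h (j - i)%N + h (i - j)%N))).
    apply: ler_sum => j _.
    case: (leqP i j) => ij.
      by rewrite distnEr // (_ : (i - j)%N = 0%N) ?h0 ?addr0 //; apply/eqP; rewrite subn_eq0 ij.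
    by rewrite distnEl ?(ltnW ij) // (_ : (j - i)%N = 0%N) ?h0 ?add0r //; apply/eqP; rewrite subn_eq0 ltnW.
  rewrite big_split /= mulr2n mulrDl mul1r.
  apply: lerD; apply: le_trans hsum.
    exact: shift_le.
  exact: rev_le.
have sumle : \sum_(i < N.+1) \sum_(j < N.+1)
   (DeltaGamma (J_choice N.+1 c nu ell eps) (Gamma_mx e nu ell) i j) ^+ 2 <= eps ^+ 2.
  apply: (@le_trans _ _ (\sum_(i < N.+1) \sum_(j < N.+1) X^-1 * h `|(i : nat) - (j : nat)|%N)).
    apply: ler_sum => i _. apply: ler_sum => j _. apply: entry.
  under eq_bigr => i _ do rewrite -mulr_sumr.
  rewrite -mulr_sumr.
  apply: (@le_trans _ _ (X^-1 * \sum_(i < N.+1) (2 * a^-1))).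
    apply: ler_wpM2l; first by rewrite invr_ge0 ltW.
    by apply: ler_sum => i _; apply: row.
  have fin : forall N1 cn : R, 0 < N1 -> 0 < cn ->
    (N1 * ell / (eps ^+ 2 * cn))^-1 * (N1 * (2 / (2 * cn / ell))) = eps ^+ 2.
    move=> N1 cn N0 cn1; field.
    by rewrite !gt_eqF // ?exprn_gt0.
  have -> : \sum_(i < N.+1) 2 / a = \sum_(0 <= i < N.+1) 2 / a by rewrite big_mkord.
  have -> : \sum_(0 <= i < N.+1) 2 / a = N.+1%:R * (2 / a).
    by rewrite sumr_const_nat subn0 [RHS]mulr_natl.
  have N0 : 0 < N.+1%:R :> R by rewrite ltr0n.
  exact: (eq_rect_r (fun z => z <= eps ^+ 2) (lexx (eps ^+ 2)) (fin N.+1%:R (c `^ nu) N0 cn0)).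
rewrite /frob_norm.
apply: (@le_trans _ _ (Num.sqrt (eps ^+ 2))).
  have e2 : 0 <= eps ^+ 2 by apply: exprn_ge0; apply: ltW.
  by rewrite (ler_sqrt _ e2).
by rewrite sqrtr_sqr ger0_norm //; apply: ltW.
Qed.
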